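(* Let $\omega$ be a circle with center $O$ and $\eta$ an ellipse with center $O$ containing $\omega$ in its interior. Let $(v_1,\dots,v_n)$ be a closed polygon with all vertices on $\eta$ and all sides tangent to $\omega$, and let $\alpha_i$ be its angle at $v_i$. Then both \[\sum_{i=1}^n\cos\alpha_i\quad\text{and}\quad\prod_{i=1}^n\cos\angle v_iOv_{i+1}\] are constant in the Poncelet family of $n$-gons containing $(v_1,\dots,v_n)$.
   Context: Indices are mod $n$. A Poncelet $n$-gon for a pair of conics $(C,D)$, $D$ inside $C$, is a closed polygon with all vertices on $C$ and all sides tangent to $D$. By the Poncelet porism, if one such closed $n$-gon exists, then starting from any point of $C$ and successively drawing tangent lines to $D$ (in the same rotational sense) produces a closed $n$-gon; the Poncelet family is this continuous 1-parameter family. Here $C=\eta$, $D=\omega$. The angle $\alpha_i$ is the angle at $v_i$ between the segments $v_iv_{i-1}$ and $v_iv_{i+1}$; $\angle v_iOv_{i+1}\in[0,\pi]$ is the angle between the vectors $v_i-O$ and $v_{i+1}-O$. *)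

(* Defs.v *)
From Stdlib Require Import Reals Lra.
Open Scope R_scope.

Definition pt := (R * R)%type.
Definition dot (p q : pt) : R := fst p * fst q + snd p * snd q.
Definition cross (p q : pt) : R := fst p * snd q - snd p * fst q.
Definition vsub (p q : pt) : pt := (fst p - fst q, snd p - snd q).
Definition vnorm (p : pt) : R := sqrt (dot p p).

Definition on_circle (O : pt) (r : R) (x : pt) : Prop := vnorm (vsub x O) = r.

(* Quadratic form of the ellipse eta with center O, semi-axes a, b and axes
   rotated by angle th: eta = { x | ellq O a b th x = 1 },
   interior of eta = { x | ellq O a b th x < 1 }. *)
Definition ellq (O : pt) (a b th : R) (x : pt) : R :=
  let u := fst x - fst O in let w := snd x - snd O in
  ((u * cos th + w * sin th) / a) ^ 2 + ((- u * sin th + w * cos th) / b) ^ 2.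
Definition on_ellipse (O : pt) (a b th : R) (x : pt) : Prop := ellq O a b th x = 1.

Definition on_line (p q x : pt) : Prop :=
  exists t : R, x = (fst p + t * (fst q - fst p), snd p + t * (snd q - snd p)).

Definition tangent_to_circle (O : pt) (r : R) (p q : pt) : Prop :=
  p <> q /\ exists! x : pt, on_line p q x /\ on_circle O r x.

Definition angle (p c q : pt) : R :=
  acos (dot (vsub p c) (vsub q c) / (vnorm (vsub p c) * vnorm (vsub q c))).

(* A polygon with n vertices is v 0, ..., v (n-1); indices taken mod n. *)
Definition vtx (v : nat -> pt) (n i : nat) : pt := v (Nat.modulo i n).

(* Closed Poncelet n-gon for (eta, omega), traversed in rotational sense
   [ccw]: all vertices on eta, every side v_i v_{i+1} tangent to omega, and
   the centre O lies strictly on the left (ccw = true) resp. right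
   (ccw = false) of every directed side, i.e. successive tangent lines are
   drawn in the same rotational sense. *)
Definition poncelet_ngon (O : pt) (r a b th : R) (ccw : bool) (n : nat)
    (v : nat -> pt) : Prop :=
  forall i : nat, (i < n)%nat ->
    on_ellipse O a b th (vtx v n i) /\
    tangent_to_circle O r (vtx v n i) (vtx v n (S i)) /\
    (if ccw
     then 0 < cross (vsub (vtx v n (S i)) (vtx v n i)) (vsub O (vtx v n i))
     else cross (vsub (vtx v n (S i)) (vtx v n i)) (vsub O (vtx v n i)) < 0).

Definition alpha (v : nat -> pt) (n i : nat) : R :=
  angle (vtx v n (i + n - 1)) (vtx v n i) (vtx v n (S i)).

Definition sum_cos_alpha (v : nat -> pt) (n : nat) : R :=
  sum_f_R0 (fun i => cos (alpha v n i)) (n - 1).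

Definition prod_cos_central (O : pt) (v : nat -> pt) (n : nat) : R :=
  prod_f_R0 (fun i => cos (angle (vtx v n i) O (vtx v n (S i)))) (n - 1).

(* Main.v *)
Require Import Defs.
From Stdlib Require Import Reals.
Open Scope R_scope.
From Stdlib Require Import Lra Psatz Nsatz Lia IndefiniteDescription.
From Coquelicot Require Import Coquelicot.
Open Scope R_scope.

Definition qf (r a b x : R) := r^2 * ((sin x)^2 / a^2 + (cos x)^2 / b^2).
Definition pf (r a b x : R) := r^2 * ((cos x)^2 / a^2 + (sin x)^2 / b^2).
Definition lf (r a b x : R) := r^2 * sin x * cos x * (1/b^2 - 1/a^2).
Definition Df (r a b x : R) := (lf r a b x)^2 + qf r a b x * (1 - pf r a b x).
Definition tf (r a b x : R) := (- lf r a b x + sqrt (Df r a b x)) / qf r a b x.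
Definition Tf (r a b x : R) := x + 2 * atan (tf r a b x).
Definition Wf (r a b x : R) := 2 * sqrt (Df r a b x).
Definition Ef (r a b x s : R) :=
  r^2 * ((cos x - s * sin x)^2 / a^2 + (sin x + s * cos x)^2 / b^2).

Definition good (r a b : R) := 0 < r /\ 0 < a /\ 0 < b /\ forall x, pf r a b x < 1.

Lemma qf_pos r a b x : good r a b -> 0 < qf r a b x.
Proof.
  intros [Hr [Ha [Hb _]]]. unfold qf.
  assert (H := sin2_cos2 x). unfold Rsqr in H.
  assert (0 < /a^2) by (apply Rinv_0_lt_compat; nra).
  assert (0 < /b^2) by (apply Rinv_0_lt_compat; nra).
  unfold Rdiv. 
  apply Rmult_lt_0_compat. nra.
  destruct (Rle_lt_dec (sin x ^2) (1/2)); nra.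
Qed.

Lemma Df_pos r a b x : good r a b -> 0 < Df r a b x.
Proof.
  intros G. pose proof (qf_pos r a b x G). destruct G as [_ [_ [_ Hp]]].
  specialize (Hp x). unfold Df. nra.
Qed.

Lemma Ef_tf r a b x : good r a b -> Ef r a b x (tf r a b x) = 1.
Proof.
  intros G. pose proof (qf_pos r a b x G). pose proof (Df_pos r a b x G).
  assert (Hs := sqrt_sqrt _ (Rlt_le _ _ H0)).
  assert (E : Ef r a b x (tf r a b x) =
     qf r a b x * (tf r a b x)^2 + 2 * lf r a b x * tf r a b x + pf r a b x).
  { unfold Ef, qf, lf, pf. destruct G as [Hr [Ha [Hb _]]]. field. lra. }
  rewrite E. unfold tf. unfold Df in Hs. field_simplify; [|lra].
  set (s := sqrt _) in *. set (l := lf r a b x) in *. set (q:= qf r a b x) in *.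
  set (p := pf r a b x) in *.
  apply Rminus_diag_uniq. field_simplify; [|lra]. 
  replace (s^2) with (s*s) by ring. rewrite Hs. field. lra.
Qed.

Lemma qt_l r a b x : good r a b -> qf r a b x * tf r a b x + lf r a b x = sqrt (Df r a b x).
Proof. intros G. pose proof (qf_pos r a b x G). unfold tf. field. lra. Qed.

Lemma tf_pos r a b x : good r a b -> 0 < tf r a b x.
Proof.
  intros G. pose proof (qf_pos r a b x G). pose proof (Df_pos r a b x G).
  destruct G as [_ [_ [_ Hp]]]. specialize (Hp x).
  unfold tf. apply Rdiv_lt_0_compat; [|lra].
  assert (lf r a b x < sqrt (Df r a b x)).
  { destruct (Rle_lt_dec (lf r a b x) 0). pose proof (sqrt_lt_R0 _ H0). lra.
    rewrite <- (sqrt_pow2 (lf r a b x)) by lra. apply sqrt_lt_1; try nra.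
    unfold Df. nra. }
  lra.
Qed.

Lemma tf_unique r a b x s : good r a b -> 0 < s -> Ef r a b x s = 1 -> s = tf r a b x.
Proof.
  intros G Hs HE. pose proof (qf_pos r a b x G). pose proof (Df_pos r a b x G).
  pose proof (Ef_tf r a b x G). pose proof (qt_l r a b x G). pose proof (tf_pos r a b x G).
  pose proof (sqrt_lt_R0 _ H0).
  destruct G as [Hr [Ha [Hb Hp]]]. specialize (Hp x).
  assert (E : forall u, Ef r a b x u = qf r a b x * u^2 + 2 * lf r a b x * u + pf r a b x).
  { intros. unfold Ef, qf, lf, pf. field. lra. }
  rewrite E in HE, H1.
  assert (qf r a b x * s + lf r a b x > 0).
  { destruct (Rle_lt_dec 0 (lf r a b x)). nra. nra. }
  assert ((s - tf r a b x) * (qf r a b x * (s + tf r a b x) + 2 * lf r a b x) = 0) by nra.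
  apply Rmult_integral in H6. destruct H6. lra. nra.
Qed.

Lemma cos2atan t : cos (2 * atan t) = (1 - t^2) / (1 + t^2).
Proof.
  replace (2 * atan t) with (atan t + atan t) by ring. rewrite cos_plus, cos_atan, sin_atan.
  assert (0 < 1 + t^2) by nra. set (u := sqrt (1 + t²)).
  assert (H1: 0 < u) by (apply sqrt_lt_R0; unfold Rsqr; nra).
  assert (H2 : u * u = 1 + t^2) by (unfold u; rewrite sqrt_sqrt; unfold Rsqr; nra).
  rewrite <- H2. field. lra.
Qed.

Lemma sin2atan t : sin (2 * atan t) = 2 * t / (1 + t^2).
Proof.
  replace (2 * atan t) with (atan t + atan t) by ring. rewrite sin_plus, cos_atan, sin_atan.
  assert (0 < 1 + t^2) by nra. set (u := sqrt (1 + t²)).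
  assert (H1: 0 < u) by (apply sqrt_lt_R0; unfold Rsqr; nra).
  assert (H2 : u * u = 1 + t^2) by (unfold u; rewrite sqrt_sqrt; unfold Rsqr; nra).
  rewrite <- H2. field. lra.
Qed.

Lemma cos_step x s : cos (x + 2 * atan s) = (cos x * (1 - s^2) - sin x * (2 * s)) / (1 + s^2).
Proof. rewrite cos_plus, cos2atan, sin2atan. field. nra. Qed.
Lemma sin_step x s : sin (x + 2 * atan s) = (sin x * (1 - s^2) + cos x * (2 * s)) / (1 + s^2).
Proof. rewrite sin_plus, cos2atan, sin2atan. field. nra. Qed.

Definition cc (r a b : R) := r^2 * (1/a^2 - 1/b^2).
Definition KK (r a b : R) := r^2 * (1/a^2 + 1/b^2) - 1.
Definition FF (r a b x y : R) := cos (y - x) - cc r a b * cos (y + x) - KK r a b.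
Definition F1 (r a b x y : R) := sin (y - x) + cc r a b * sin (y + x).
Definition F2 (r a b x y : R) := - sin (y - x) + cc r a b * sin (y + x).

Lemma FF_step r a b x s : 0 < a -> 0 < b -> Ef r a b x s = 1 -> FF r a b x (x + 2 * atan s) = 0.
Proof.
  intros Ha Hb HE. unfold FF. rewrite (cos_minus (x + 2 * atan s) x), (cos_plus (x + 2 * atan s) x).
  assert (Hw : 0 < 1 + s^2) by nra.
  assert (E1 := cos_step x s). assert (E2 := sin_step x s).
  set (cp := cos (x + 2 * atan s)) in *. set (sp := sin (x + 2 * atan s)) in *.
  set (w := 1 + s^2) in *.
  assert (E1' : w * cp = cos x * (1 - s^2) - sin x * (2 * s)) by (rewrite E1; field; lra).
  assert (E2' : w * sp = sin x * (1 - s^2) + cos x * (2 * s)) by (rewrite E2; field; lra).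
  assert (HH := sin2_cos2 x). unfold Rsqr in HH.
  unfold Ef in HE. unfold cc, KK.
  set (ia := 1/a^2) in *. set (ib := 1/b^2) in *.
  assert (HE' : r^2 * ((cos x - s * sin x)^2 * ia + (sin x + s * cos x)^2 * ib) = 1).
  { rewrite <- HE. unfold ia, ib. field. lra. }
  apply Rmult_eq_reg_l with w; [|lra].
  clear E1 E2 HE. unfold w in *. clearbody ia ib cp sp. cbn [pow] in *. nsatz.
Qed.

Ltac nsz := cbn [pow] in *; nsatz.

Lemma F2_step r a b x s : 0 < a -> 0 < b -> Ef r a b x s = 1 ->
  F2 r a b x (x + 2 * atan s) = -2 * (qf r a b x * s + lf r a b x).
Proof.
  intros Ha Hb HE. unfold F2. rewrite (sin_minus (x + 2 * atan s) x), (sin_plus (x + 2 * atan s) x).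
  assert (Hw : 0 < 1 + s^2) by nra.
  assert (E1 := cos_step x s). assert (E2 := sin_step x s).
  set (cp := cos (x + 2 * atan s)) in *. set (sp := sin (x + 2 * atan s)) in *.
  assert (E1' : (1 + s^2) * cp = cos x * (1 - s^2) - sin x * (2 * s)) by (rewrite E1; field; lra).
  assert (E2' : (1 + s^2) * sp = sin x * (1 - s^2) + cos x * (2 * s)) by (rewrite E2; field; lra).
  assert (HH := sin2_cos2 x). unfold Rsqr in HH.
  unfold Ef in HE. unfold cc, qf, lf.
  set (ia := 1/a^2) in *. set (ib := 1/b^2) in *.
  assert (HE' : r^2 * ((cos x - s * sin x)^2 * ia + (sin x + s * cos x)^2 * ib) = 1).
  { rewrite <- HE. unfold ia, ib. field. lra. }
  assert (Hia : ia = /a^2) by (unfold ia; field; lra).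
  assert (Hib : ib = /b^2) by (unfold ib; field; lra).
  unfold Rdiv. rewrite <- Hia, <- Hib.
  apply Rmult_eq_reg_l with (1 + s^2); [|lra].
  clear E1 E2 HE Hia Hib. clearbody ia ib cp sp. nsz.
Qed.

Lemma Ef_back r a b x s : Ef r a b (x + 2 * atan s) (- s) = Ef r a b x s.
Proof.
  unfold Ef. rewrite cos_step, sin_step.
  assert (HH := sin2_cos2 x). unfold Rsqr in HH.
  assert (Hw : 0 < 1 + s^2) by nra.
  replace ((cos x * (1 - s ^ 2) - sin x * (2 * s)) / (1 + s ^ 2) - - s * ((sin x * (1 - s ^ 2) + cos x * (2 * s)) / (1 + s ^ 2)))
    with (cos x - s * sin x) by (field; lra).
  replace ((sin x * (1 - s ^ 2) + cos x * (2 * s)) / (1 + s ^ 2) + - s * ((cos x * (1 - s ^ 2) - sin x * (2 * s)) / (1 + s ^ 2)))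
    with (sin x + s * cos x) by (field; lra).
  reflexivity.
Qed.

Lemma Ef_exp r a b x u : 0 < a -> 0 < b ->
  Ef r a b x u = qf r a b x * u^2 + 2 * lf r a b x * u + pf r a b x.
Proof. intros. unfold Ef, qf, lf, pf. field. lra. Qed.

Lemma back_sqrt r a b y u : good r a b -> 0 < u -> Ef r a b y (- u) = 1 ->
  qf r a b y * u - lf r a b y = sqrt (Df r a b y).
Proof.
  intros G Hu HE. pose proof (qf_pos r a b y G).
  destruct G as [Hr [Ha [Hb Hp]]]. specialize (Hp y).
  rewrite Ef_exp in HE by lra.
  assert (Hpos : qf r a b y * u - lf r a b y > 0).
  { destruct (Rle_lt_dec (lf r a b y) 0). nra. nra. }
  assert (HD : Df r a b y = (qf r a b y * u - lf r a b y)^2).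
  { unfold Df. nra. }
  rewrite HD, sqrt_pow2; lra.
Qed.

Lemma W_left r a b x : good r a b -> - F2 r a b x (Tf r a b x) = Wf r a b x.
Proof.
  intros G. pose proof (Ef_tf r a b x G). destruct G as [Hr [Ha [Hb Hp]]].
  unfold Tf. rewrite F2_step by lra. unfold Wf. rewrite <- qt_l by (repeat split; auto). ring.
Qed.

Lemma F1_F2 r a b x y : F1 r a b x y = F2 r a b y x.
Proof.
  unfold F1, F2. replace (y - x) with (- (x - y)) by ring. rewrite sin_neg.
  rewrite (Rplus_comm y x). ring.
Qed.

Lemma W_right r a b x : good r a b -> F1 r a b x (Tf r a b x) = Wf r a b (Tf r a b x).
Proof.
  intros G. pose proof (Ef_tf r a b x G). pose proof (tf_pos r a b x G).
  rewrite F1_F2. set (t := tf r a b x) in *. set (y := Tf r a b x).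
  assert (Hx : x = y + 2 * atan (- t)) by (unfold y, Tf; fold t; rewrite atan_opp; ring).
  assert (HE : Ef r a b y (- t) = 1) by (unfold y, Tf; fold t; rewrite Ef_back; auto).
  pose proof (back_sqrt r a b y t G H0 HE).
  destruct G as [Hr [Ha [Hb Hp]]].
  rewrite Hx at 1. rewrite F2_step by lra. unfold Wf. rewrite <- H1. ring.
Qed.

Lemma exd_lf r a b x : ex_derive (lf r a b) x.
Proof. unfold lf. auto_derive. auto. Qed.
Lemma exd_qf r a b x : good r a b -> ex_derive (qf r a b) x.
Proof. intros [Hr [Ha [Hb _]]]. unfold qf. auto_derive. repeat split; nra. Qed.
Lemma exd_pf r a b x : good r a b -> ex_derive (pf r a b) x.
Proof. intros [Hr [Ha [Hb _]]]. unfold pf. auto_derive. repeat split; nra. Qed.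

Lemma exd_Df r a b x : good r a b -> ex_derive (Df r a b) x.
Proof.
  intros G. unfold Df. auto_derive. repeat split.
  apply exd_lf. apply exd_qf; auto. apply exd_pf; auto.
Qed.

Lemma exd_tf r a b x : good r a b -> ex_derive (tf r a b) x.
Proof.
  intros G. pose proof (qf_pos r a b x G). pose proof (Df_pos r a b x G).
  unfold tf. auto_derive. repeat split.
  apply exd_lf. apply exd_Df; auto. auto. apply exd_qf; auto. lra.
Qed.

Lemma Ephi_id r a b x u d : 0 < a -> 0 < b ->
  r * (r * 1) *
  ((1 * - sin x + - (1 * d * sin x + u * (1 * cos x))) *
   ((1 + 1) * ((cos x + - (u * sin x)) * 1)) * / (a * (a * 1)) +
   (1 * cos x + (1 * d * cos x + u * (1 * - sin x))) *
   ((1 + 1) * ((sin x + u * cos x) * 1)) * / (b * (b * 1)))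
  = (1 + u^2) * (2 * (qf r a b x * u + lf r a b x)) - 2 * u * Ef r a b x u
    + 2 * (qf r a b x * u + lf r a b x) * d.
Proof.
  intros Ha Hb. unfold qf, lf, Ef. field. lra.
Qed.

Lemma Wf_pos r a b x : good r a b -> 0 < Wf r a b x.
Proof. intros G. unfold Wf. pose proof (sqrt_lt_R0 _ (Df_pos r a b x G)). lra. Qed.

Lemma Wf_qt r a b x : good r a b -> Wf r a b x = 2 * (qf r a b x * tf r a b x + lf r a b x).
Proof. intros G. rewrite qt_l; auto. Qed.

Lemma der_tf_val r a b x : good r a b ->
  Wf r a b x * Derive (tf r a b) x = - (1 + (tf r a b x)^2) * Wf r a b x + 2 * tf r a b x.
Proof.
  intros G. pose proof (exd_tf r a b x G).
  assert (HD : is_derive (fun y => Ef r a b y (tf r a b y)) x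
     ((1 + (tf r a b x)^2) * (2 * (qf r a b x * tf r a b x + lf r a b x))
      - 2 * tf r a b x * Ef r a b x (tf r a b x)
      + 2 * (qf r a b x * tf r a b x + lf r a b x) * Derive (tf r a b) x)).
  { destruct G as [Hr [Ha [Hb _]]]. unfold Ef at 1. auto_derive.
    split; auto. change (fun x0 : R => tf r a b x0) with (tf r a b). unfold qf, lf, Ef. field. lra. }
  assert (HC : is_derive (fun y => Ef r a b y (tf r a b y)) x 0).
  { apply is_derive_ext with (fun _ => 1). intros. symmetry. apply Ef_tf; auto.
    auto_derive; auto. }
  pose proof (is_derive_unique _ _ _ HD) as U1. pose proof (is_derive_unique _ _ _ HC) as U2.
  rewrite U1 in U2. rewrite Ef_tf in U2 by auto. rewrite <- Wf_qt in U2 by auto.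
  lra.
Qed.

Lemma Wf_T r a b x : good r a b ->
  Wf r a b (Tf r a b x) = - Wf r a b x + 4 * tf r a b x / (1 + (tf r a b x)^2).
Proof.
  intros G. rewrite <- W_right by auto. rewrite <- (W_left r a b x G).
  unfold F1, F2. replace (Tf r a b x - x) with (2 * atan (tf r a b x)) by (unfold Tf; ring).
  rewrite sin2atan. field. nra.
Qed.

Lemma der_Tf r a b x : good r a b ->
  is_derive (Tf r a b) x (Wf r a b (Tf r a b x) / Wf r a b x).
Proof.
  intros G. pose proof (exd_tf r a b x G). pose proof (der_tf_val r a b x G).
  pose proof (Wf_pos r a b x G). rewrite Wf_T by auto.
  unfold Tf. auto_derive. auto.
  set (t := tf r a b x) in *. set (d := Derive (fun x0 => tf r a b x0) x) in *.
  set (w := Wf r a b x) in *.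
  assert (0 < 1 + t^2) by nra.
  apply Rmult_eq_reg_l with (w * (1 + t^2)); [|nra].
  replace (w * (1 + t ^ 2) * (1 + 2 * (1 * d * / (1 + t * (t * 1)))))
    with (w * (1 + t^2) + 2 * (w * d)) by (field; lra).
  rewrite H0. field. lra.
Qed.

Fixpoint It (r a b : R) (j : nat) (x : R) : R :=
  match j with O => x | S j => Tf r a b (It r a b j x) end.

Lemma der_It r a b j x : good r a b ->
  is_derive (It r a b j) x (Wf r a b (It r a b j x) / Wf r a b x).
Proof.
  intros G. pose proof (Wf_pos r a b x G). induction j as [|j IH]; simpl.
  - apply is_derive_ext with (fun y => y). auto.
    replace (Wf r a b x / Wf r a b x) with 1 by (field; lra). apply (is_derive_id x).
  - pose proof (der_Tf r a b (It r a b j x) G).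
    pose proof (is_derive_comp _ _ x _ _ H0 IH) as HC. simpl in HC.
    eapply is_derive_ext_loc; [| eapply is_derive_ext; [intros; reflexivity|]].
    2: { replace (Wf r a b (Tf r a b (It r a b j x)) / Wf r a b x) with
        (scal (Wf r a b (It r a b j x) / Wf r a b x)
              (Wf r a b (Tf r a b (It r a b j x)) / Wf r a b (It r a b j x))).
         exact HC. unfold scal; simpl; unfold mult; simpl.
         pose proof (Wf_pos r a b (It r a b j x) G). field. lra. }
    apply filter_forall. reflexivity.
Qed.

Definition isper (c : R) := cos c = 1 /\ sin c = 0.

Lemma per_cos c x : isper c -> cos (x + c) = cos x.
Proof. intros [H1 H2]. rewrite cos_plus, H1, H2. ring. Qed.
Lemma per_sin c x : isper c -> sin (x + c) = sin x.
Proof. intros [H1 H2]. rewrite sin_plus, H1, H2. ring. Qed.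
Lemma per_double c : isper c -> isper (2 * c).
Proof.
  intros [H1 H2]. split. replace (2*c) with (c + c) by ring. rewrite cos_plus, H1, H2. ring.
  replace (2*c) with (c + c) by ring. rewrite sin_plus, H1, H2. ring.
Qed.

Lemma tf_per r a b c x : isper c -> tf r a b (x + c) = tf r a b x.
Proof.
  intros P. unfold tf, Df, lf, qf, pf. rewrite !(per_cos c x P), !(per_sin c x P). reflexivity.
Qed.
Lemma Wf_per r a b c x : isper c -> Wf r a b (x + c) = Wf r a b x.
Proof.
  intros P. unfold Wf, Df, lf, qf, pf. rewrite !(per_cos c x P), !(per_sin c x P). reflexivity.
Qed.
Lemma Tf_per r a b c x : isper c -> Tf r a b (x + c) = Tf r a b x + c.
Proof. intros P. unfold Tf. rewrite tf_per by auto. ring. Qed.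
Lemma It_per r a b c j x : isper c -> It r a b j (x + c) = It r a b j x + c.
Proof. intros P. induction j; simpl; auto. rewrite IHj. apply Tf_per; auto. Qed.

Fixpoint Sm (r a b : R) (j : nat) (x : R) : R :=
  match j with O => 0
  | S j => Sm r a b j x - cos (It r a b (S j) x - It r a b j x) end.

Lemma two_sin_sin A B : 2 * sin A * sin B = cos (A - B) - cos (A + B).
Proof. rewrite cos_minus, cos_plus. ring. Qed.

Lemma der_Sm r a b j x : good r a b ->
  is_derive (Sm r a b j) x
   (cc r a b * (cos (2 * x) - cos (2 * It r a b j x)) / Wf r a b x).
Proof.
  intros G. pose proof (Wf_pos r a b x G). induction j as [|j IH]; simpl.
  - apply is_derive_ext with (fun _ => 0). auto.
    replace (cc r a b * (cos (2 * x) - cos (2 * x)) / Wf r a b x) with 0 by (field; lra).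
    auto_derive; auto.
  - pose proof (der_It r a b j x G) as D0. pose proof (der_It r a b (S j) x G) as D1.
    simpl in D1.
    set (y0 := It r a b j x) in *. 
    assert (HW1 := W_right r a b y0 G). assert (HW0 := W_left r a b y0 G).
    set (y1 := Tf r a b y0) in *.
    apply is_derive_ext with
      (fun z => Sm r a b j z - cos (Tf r a b (It r a b j z) - It r a b j z)). auto.
    evar (e : R).
    assert (HD : is_derive (fun z => Sm r a b j z - cos (Tf r a b (It r a b j z) - It r a b j z)) x e).
    { apply (is_derive_minus (V:=R_NormedModule)). exact IH.
      apply (is_derive_comp (V:=R_NormedModule) (fun u => cos u)). apply is_derive_cos.
      apply (is_derive_minus (V:=R_NormedModule)); [exact D1 | exact D0]. }
    subst e. 
    match goal with |- is_derive _ _ ?v => replace v with (minus (cc r a b * (cos (2 * x) - cos (2 * y0)) / Wf r a b x)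
       (scal (minus (Wf r a b y1 / Wf r a b x) (Wf r a b y0 / Wf r a b x)) (- sin (y1 - y0)))) end.
    exact HD.
    unfold minus, scal, plus, opp; simpl; unfold mult; simpl.
    rewrite <- HW1, <- HW0. unfold F1, F2.
    assert (C2 : cos (2 * y0) = cos (2 * y1) + 2 * sin (y1 + y0) * sin (y1 - y0)).
    { replace (2 * y0) with ((y1 + y0) - (y1 - y0)) by ring.
      replace (2 * y1) with ((y1 + y0) + (y1 - y0)) by ring.
      rewrite (cos_minus (y1 + y0)), (cos_plus (y1 + y0)). ring. }
    rewrite C2. field. lra.
Qed.

Lemma prod_trig k x0 x1 x2 :
  - sin ((x2 - x0) / 2) * ((sin (x2 - x1) + k * sin (x2 + x1)) - (- (- sin (x1 - x0) + k * sin (x1 + x0)))) / 2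
  = cos ((x2 - x0) / 2) * ((cos (x2 - x1) + k * cos (x2 + x1)) / 2 - (cos (x1 - x0) + k * cos (x1 + x0)) / 2).
Proof.
  replace ((sin (x2 - x1) + k * sin (x2 + x1)) - (- (- sin (x1 - x0) + k * sin (x1 + x0))))
    with ((sin (x2 - x1) - sin (x1 - x0)) + k * (sin (x2 + x1) + sin (x1 + x0))) by ring.
  replace ((cos (x2 - x1) + k * cos (x2 + x1)) / 2 - (cos (x1 - x0) + k * cos (x1 + x0)) / 2)
    with (((cos (x2 - x1) - cos (x1 - x0)) + k * (cos (x2 + x1) - cos (x1 + x0))) / 2) by field.
  rewrite (form4 (x2 - x1) (x1 - x0)), (form3 (x2 + x1) (x1 + x0)),
          (form2 (x2 - x1) (x1 - x0)), (form2 (x2 + x1) (x1 + x0)).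
  replace ((x2 - x1 + (x1 - x0)) / 2) with ((x2 - x0) / 2) by field.
  replace ((x2 + x1 - (x1 + x0)) / 2) with ((x2 - x0) / 2) by field.
  field.
Qed.

Lemma is_derive_eq (f : R -> R) x e v : is_derive f x e -> e = v -> is_derive f x v.
Proof. intros H E; subst; auto. Qed.

Fixpoint Pm (r a b : R) (j : nat) (x : R) : R :=
  match j with O => 1
  | S j => Pm r a b j x * cos ((It r a b (S (S j)) x - It r a b j x) / 2) end.

Definition Jp (r a b : R) (i : nat) (x : R) : R :=
  (cos (It r a b (S i) x - It r a b i x) + cc r a b * cos (It r a b (S i) x + It r a b i x)) / 2.

Lemma der_Pm r a b j x : good r a b ->
  is_derive (Pm r a b j) x (Pm r a b j x * (Jp r a b j x - Jp r a b 0 x) / Wf r a b x).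
Proof.
  intros G. pose proof (Wf_pos r a b x G). induction j as [|j IH]; simpl Pm.
  - apply is_derive_ext with (fun _ => 1). auto.
    replace (1 * (Jp r a b 0 x - Jp r a b 0 x) / Wf r a b x) with 0 by (field; lra).
    auto_derive; auto.
  - pose proof (der_It r a b j x G) as D0. pose proof (der_It r a b (S (S j)) x G) as D2.
    set (y0 := It r a b j x) in *. 
    set (y1 := It r a b (S j) x) in *. set (y2 := It r a b (S (S j)) x) in *.
    assert (HW2 : F1 r a b y1 y2 = Wf r a b y2) by (apply W_right; auto).
    assert (HW0 : - F2 r a b y0 y1 = Wf r a b y0) by (apply W_left; auto).
    evar (e : R).
    assert (HD : is_derive (fun z => Pm r a b j z * cos ((It r a b (S (S j)) z - It r a b j z) / 2)) x e).
    { apply (is_derive_mult (K:=R_AbsRing)). exact IH.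
      apply (is_derive_comp (V:=R_NormedModule) (fun u => cos (u / 2))).
      auto_derive. auto. reflexivity.
      apply (is_derive_minus (V:=R_NormedModule)); [exact D2 | exact D0].
      intros; unfold mult; simpl; ring. }
    subst e. refine (is_derive_eq _ _ _ _ HD _).
    unfold minus, scal, plus, opp, mult; simpl; unfold mult; simpl.
    fold y0 y1 y2.
    unfold Jp. fold y0 y1. simpl It. fold y1 y2.
    rewrite <- HW2, <- HW0. unfold F1, F2.
    pose proof (prod_trig (cc r a b) y0 y1 y2) as PT.
    change (Tf r a b (Tf r a b y0)) with y2. change (Tf r a b (Tf r a b (It r a b j x))) with y2.
    change ((y2 - y0) * / 2) with ((y2 - y0) / 2).
    apply Rminus_diag_uniq.
    match type of PT with ?L = ?R =>
      match goal with |- ?A - ?B = 0 =>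
        replace (A - B) with (Pm r a b j x / Wf r a b x * (L - R)) by (field; lra) end end.
    rewrite PT. ring.
Qed.

Lemma der_cont (f : R -> R) x e : is_derive f x e -> continuity_pt f x.
Proof.
  intros H. apply continuity_pt_filterlim. apply (ex_derive_continuous (V:=R_NormedModule)).
  exists e. exact H.
Qed.

Lemma const_of_der0 (f : R -> R) : (forall y, is_derive f y 0) -> forall y z, f y = f z.
Proof.
  intros H y z. destruct (MVT_gen f y z (fun _ => 0)) as [c [_ Hc]].
  intros; apply H. intros; apply (der_cont _ _ 0); apply H. lra.
Qed.

Lemma inj_of_pos_der (f df : R -> R) : (forall y, is_derive f y (df y)) ->
  (forall y, 0 < df y) -> forall y z, f y = f z -> y = z.
Proof.
  intros H Hp y z E. destruct (MVT_gen f y z df) as [c [_ Hc]].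
  intros; apply H. intros; apply (der_cont _ _ (df x)); apply H.
  specialize (Hp c). destruct (Req_dec y z); auto.
  assert (df c * (z - y) <> 0). { apply Rmult_integral_contrapositive. split; lra. }
  lra.
Qed.

Lemma exd_iW r a b x : good r a b -> ex_derive (fun y => / Wf r a b y) x.
Proof.
  intros G. pose proof (Df_pos r a b x G). pose proof (Wf_pos r a b x G).
  unfold Wf in *. auto_derive. repeat split. apply exd_Df; auto. auto. lra.
Qed.

Definition Phi (r a b y : R) : R := RInt (fun z => / Wf r a b z) 0 y.

Lemma der_Phi r a b y : good r a b -> is_derive (Phi r a b) y (/ Wf r a b y).
Proof.
  intros G. unfold Phi.
  apply (is_derive_RInt (fun z => / Wf r a b z) (fun y => RInt (fun z => / Wf r a b z) 0 y) 0 y).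
  - apply filter_forall. intros b0. apply (RInt_correct (V:=R_CompleteNormedModule)).
    apply (ex_RInt_continuous (V:=R_CompleteNormedModule)). intros z _.
    apply (ex_derive_continuous (V:=R_NormedModule)). apply exd_iW; auto.
  - apply (ex_derive_continuous (V:=R_NormedModule)). apply exd_iW; auto.
Qed.

Lemma Phi_T r a b y : good r a b ->
  Phi r a b (Tf r a b y) - Phi r a b y = Phi r a b (Tf r a b 0) - Phi r a b 0.
Proof.
  intros G. apply (const_of_der0 (fun y => Phi r a b (Tf r a b y) - Phi r a b y)).
  intros z. pose proof (Wf_pos r a b z G). pose proof (Wf_pos r a b (Tf r a b z) G).
  refine (is_derive_eq _ _ _ _ _ _).
  apply (is_derive_minus (V:=R_NormedModule)).
  apply (is_derive_comp (V:=R_NormedModule) (Phi r a b) (Tf r a b)).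
  apply der_Phi; auto. apply der_Tf; auto. apply der_Phi; auto.
  unfold minus, scal, plus, opp, mult; simpl; unfold mult; simpl. field. lra.
Qed.

Lemma Phi_It r a b j y : good r a b ->
  Phi r a b (It r a b j y) = Phi r a b y + INR j * (Phi r a b (Tf r a b 0) - Phi r a b 0).
Proof.
  intros G. induction j; simpl It. simpl. ring.
  pose proof (Phi_T r a b (It r a b j y) G). rewrite S_INR. lra.
Qed.

Lemma Phi_shift r a b c y : good r a b -> isper c ->
  Phi r a b (y + c) - Phi r a b y = Phi r a b (0 + c) - Phi r a b 0.
Proof.
  intros G P. apply (const_of_der0 (fun y => Phi r a b (y + c) - Phi r a b y)).
  intros z. pose proof (Wf_pos r a b z G).
  refine (is_derive_eq _ _ _ _ _ _).
  apply (is_derive_minus (V:=R_NormedModule)).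
  apply (is_derive_comp (V:=R_NormedModule) (Phi r a b) (fun y => y + c)).
  apply der_Phi; auto. auto_derive; auto. apply der_Phi; auto.
  unfold minus, scal, plus, opp, mult; simpl; unfold mult; simpl.
  rewrite Wf_per by auto. field. lra.
Qed.

Lemma porism r a b n c x0 : good r a b -> isper c -> It r a b n x0 = x0 + c ->
  forall y, It r a b n y = y + c.
Proof.
  intros G P H y.
  apply (inj_of_pos_der (Phi r a b) (fun z => / Wf r a b z)).
  intros; apply der_Phi; auto.
  intros; apply Rinv_0_lt_compat, Wf_pos; auto.
  rewrite Phi_It by auto.
  pose proof (Phi_It r a b n x0 G). rewrite H in H0.
  pose proof (Phi_shift r a b c x0 G P). pose proof (Phi_shift r a b c y G P).
  lra.
Qed.

Lemma Sm_const r a b n c : good r a b -> isper c -> (forall y, It r a b n y = y + c) ->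
  forall y z, Sm r a b n y = Sm r a b n z.
Proof.
  intros G P H. apply const_of_der0. intros y.
  refine (is_derive_eq _ _ _ _ (der_Sm r a b n y G) _).
  rewrite H. replace (2 * (y + c)) with (2 * y + 2 * c) by ring.
  rewrite (per_cos (2 * c)) by (apply per_double; auto).
  replace (cos (2 * y) - cos (2 * y)) with 0 by ring. unfold Rdiv. rewrite Rmult_0_r, Rmult_0_l. reflexivity.
Qed.

Lemma Pm_const r a b n c : good r a b -> isper c -> (forall y, It r a b n y = y + c) ->
  forall y z, Pm r a b n y = Pm r a b n z.
Proof.
  intros G P H. apply const_of_der0. intros y.
  refine (is_derive_eq _ _ _ _ (der_Pm r a b n y G) _).
  assert (Jp r a b n y = Jp r a b 0 y).
  { unfold Jp. simpl It. rewrite H. rewrite Tf_per by auto.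
    replace (Tf r a b y + c - (y + c)) with (Tf r a b y - y) by ring.
    replace (Tf r a b y + c + (y + c)) with ((Tf r a b y + y) + 2 * c) by ring.
    rewrite (per_cos (2 * c)) by (apply per_double; auto). reflexivity. }
  rewrite H0. replace (Jp r a b 0 y - Jp r a b 0 y) with 0 by ring.
  unfold Rdiv. rewrite Rmult_0_r, Rmult_0_l. reflexivity.
Qed.

Definition pnt (O : pt) (r th h s : R) : pt :=
  (fst O + r * cos (h + th) - s * sin (h + th), snd O + r * sin (h + th) + s * cos (h + th)).

Lemma ellq_pnt O a b th r h s : 0 < a -> 0 < b ->
  ellq O a b th (pnt O r th h s) = ((r * cos h - s * sin h) / a)^2 + ((r * sin h + s * cos h) / b)^2.
Proof.
  intros Ha Hb. unfold ellq, pnt; simpl.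
  assert (HH := sin2_cos2 th). unfold Rsqr in HH.
  assert (E1 : (fst O + r * cos (h + th) - s * sin (h + th) - fst O) * cos th +
               (snd O + r * sin (h + th) + s * cos (h + th) - snd O) * sin th = r * cos h - s * sin h).
  { rewrite cos_plus, sin_plus. set (C := cos th) in *. set (S := sin th) in *.
    clearbody C S. cbn [pow] in *. nsatz. }
  assert (E2 : - (fst O + r * cos (h + th) - s * sin (h + th) - fst O) * sin th +
               (snd O + r * sin (h + th) + s * cos (h + th) - snd O) * cos th = r * sin h + s * cos h).
  { rewrite cos_plus, sin_plus. set (C := cos th) in *. set (S := sin th) in *.
    clearbody C S. cbn [pow] in *. nsatz. }
  rewrite E1, E2. reflexivity.
Qed.

Lemma pnt_ext O r th h h' s : cos h = cos h' -> sin h = sin h' -> pnt O r th h s = pnt O r th h' s.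
Proof. intros C S. unfold pnt. rewrite !cos_plus, !sin_plus, C, S. reflexivity. Qed.

Lemma vsub_pnt_O O r th h s :
  vsub (pnt O r th h s) O = (r * cos (h + th) - s * sin (h + th), r * sin (h + th) + s * cos (h + th)).
Proof. unfold vsub, pnt; simpl. f_equal; ring. Qed.

Lemma vsub_pnt_pnt O r th h s1 s2 :
  vsub (pnt O r th h s1) (pnt O r th h s2) = ((s1 - s2) * - sin (h + th), (s1 - s2) * cos (h + th)).
Proof. unfold vsub, pnt; simpl. f_equal; ring. Qed.

Lemma sqrt_sq_abs x : sqrt (x * x) = Rabs x.
Proof. rewrite <- sqrt_Rsqr_abs. unfold Rsqr. reflexivity. Qed.

Lemma pnt_polar O r th h s : 0 < r ->
  vsub (pnt O r th h s) O =
  (sqrt (r^2 + s^2) * cos (h + atan (s / r) + th), sqrt (r^2 + s^2) * sin (h + atan (s / r) + th)).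
Proof.
  intros Hr. rewrite vsub_pnt_O.
  replace (h + atan (s / r) + th) with ((h + th) + atan (s / r)) by ring.
  rewrite (cos_plus (h + th) (atan (s / r))), (sin_plus (h + th) (atan (s / r))), cos_atan, sin_atan.
  assert (HR : sqrt (r^2 + s^2) = r * sqrt (1 + (s/r)²)).
  { rewrite <- (sqrt_pow2 r) at 2 by lra. rewrite <- sqrt_mult by (try nra; unfold Rsqr; nra).
    f_equal. unfold Rsqr. field. lra. }
  rewrite HR. assert (0 < sqrt (1 + (s / r)²)) by (apply sqrt_lt_R0; unfold Rsqr; nra).
  f_equal; field; lra.
Qed.

Lemma unit_angle x y : x^2 + y^2 = 1 -> exists t, cos t = x /\ sin t = y.
Proof.
  intros H. assert (Hx : -1 <= x <= 1) by (split; nra).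
  destruct (Rle_lt_dec 0 y).
  - exists (acos x). split. apply cos_acos; auto. rewrite sin_acos by auto.
    rewrite <- (sqrt_pow2 y) by auto. f_equal. unfold Rsqr. nra.
  - exists (- acos x). split. rewrite cos_neg. apply cos_acos; auto.
    rewrite sin_neg, sin_acos by auto.
    replace y with (- (- y)) by ring. f_equal. rewrite <- (sqrt_pow2 (-y)) by lra. f_equal. unfold Rsqr. nra.
Qed.

Lemma oncirc_iff O r x : 0 < r ->
  (on_circle O r x <-> (fst x - fst O)^2 + (snd x - snd O)^2 = r^2).
Proof.
  intros Hr. unfold on_circle, vnorm, dot, vsub; simpl. split; intros H.
  - rewrite <- H. repeat rewrite Rmult_1_r. rewrite sqrt_sqrt. ring. apply Rplus_le_le_0_compat; apply Rle_0_sqr.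
  - replace ((fst x - fst O) * (fst x - fst O) + (snd x - snd O) * (snd x - snd O)) with (r^2) by nra.
    apply sqrt_pow2. lra.
Qed.

Lemma quad_sign al be ga s1 s2 : 0 < al -> s1 <> s2 ->
  al * s1^2 + be * s1 + ga = 1 -> al * s2^2 + be * s2 + ga = 1 -> ga < 1 -> s1 * s2 < 0.
Proof.
  intros Ha Hne H1 H2 H0.
  assert (al * (s1 + s2) + be = 0).
  { apply Rmult_eq_reg_l with (s1 - s2). 2: lra. ring_simplify. nra. }
  assert (ga - 1 = al * s1 * s2) by nra.
  nra.
Qed.

Lemma side_lemma O r a b th (ccw : bool) P Q :
  0 < r -> 0 < a -> 0 < b -> (forall x, on_circle O r x -> ellq O a b th x < 1) ->
  on_ellipse O a b th P -> on_ellipse O a b th Q -> tangent_to_circle O r P Q ->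
  (if ccw then 0 < cross (vsub Q P) (vsub O P) else cross (vsub Q P) (vsub O P) < 0) ->
  exists h s1 s2, P = pnt O r th h s1 /\ Q = pnt O r th h s2 /\
     (if ccw then s1 < 0 < s2 else s2 < 0 < s1).
Proof.
  intros Hr Ha Hb HC HP HQ [Hne [X0 [[HL0 HC0] HU]]] Hor.
  destruct P as [p1 p2], Q as [q1 q2], O as [o1 o2]. simpl in *.
  set (px := p1 - o1). set (py := p2 - o2). set (dx := q1 - p1). set (dy := q2 - p2).
  set (A := dx^2 + dy^2). set (B := px * dx + py * dy).
  assert (HA : 0 < A).
  { destruct (Req_dec dx 0); destruct (Req_dec dy 0).
    - exfalso. apply Hne. unfold dx, dy in *. f_equal; lra.
    - unfold A. nra. - unfold A. nra. - unfold A. nra. }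
  assert (Hroot : forall t, (px + t * dx)^2 + (py + t * dy)^2 = r^2 ->
             (p1 + t * dx, p2 + t * dy) = X0).
  { intros t Ht. symmetry. apply HU. split. exists t. simpl. reflexivity.
    apply oncirc_iff; auto. simpl. unfold px, py in Ht. replace (p1 + t * dx - o1) with (px + t * dx) by (unfold px; ring).
    replace (p2 + t * dy - o2) with (py + t * dy) by (unfold py; ring). auto. }
  destruct HL0 as [t1 Ht1]. cbn [fst snd] in Ht1.
  apply oncirc_iff in HC0; auto. rewrite Ht1 in HC0. cbn [fst snd] in HC0.
  assert (Ht1' : (px + t1 * dx)^2 + (py + t1 * dy)^2 = r^2).
  { rewrite <- HC0. unfold px, py, dx, dy. ring. }
  set (t2 := - 2 * B / A - t1).
  assert (Ht2 : (px + t2 * dx)^2 + (py + t2 * dy)^2 = r^2).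
  { rewrite <- Ht1'. assert (A <> 0) by lra. unfold t2, B, A in *. field. auto. }
  assert (E12 : t1 = t2).
  { pose proof (Hroot t1 Ht1') as E1. pose proof (Hroot t2 Ht2) as E2. rewrite <- E2 in E1.
    injection E1. intros F1 F2.
    destruct (Req_dec dx 0). 
    - assert (dy <> 0) by (intro; unfold A in HA; subst; nra). 
      apply Rmult_eq_reg_r with dy; auto. lra.
    - apply Rmult_eq_reg_r with dx; auto. lra. }
  assert (Ht0 : t1 = - B / A).
  { unfold t2 in E12. apply Rmult_eq_reg_l with 2; [|lra].
    replace (2 * t1) with (t1 + t1) by ring. rewrite E12 at 1. field. lra. }
  set (ux := (px + t1 * dx) / r). set (uy := (py + t1 * dy) / r).
  assert (Hu : ux^2 + uy^2 = 1).
  { unfold ux, uy. replace (((px + t1 * dx) / r) ^ 2 + ((py + t1 * dy) / r) ^ 2)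
      with (((px + t1 * dx) ^ 2 + (py + t1 * dy) ^ 2) / r^2) by (field; lra).
    rewrite Ht1'. field. lra. }
  destruct (unit_angle ux uy Hu) as [te [Hcos Hsin]].
  assert (Hperp : (px + t1 * dx) * dx + (py + t1 * dy) * dy = 0).
  { rewrite Ht0. unfold B, A in *. field. lra. }
  assert (Hud : ux * dx + uy * dy = 0).
  { unfold ux, uy. replace ((px + t1 * dx) / r * dx + (py + t1 * dy) / r * dy)
      with (((px + t1 * dx) * dx + (py + t1 * dy) * dy) / r) by (field; lra).
    rewrite Hperp. field. lra. }
  set (lam := - dx * uy + dy * ux).
  assert (Hdx : dx = lam * - uy).
  { unfold lam. transitivity (dx * (ux^2 + uy^2)). rewrite Hu; ring.
    transitivity (ux * (ux * dx + uy * dy) + (dx * uy - dy * ux) * uy). ring. rewrite Hud. ring. }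
  assert (Hdy : dy = lam * ux).
  { unfold lam. transitivity (dy * (ux^2 + uy^2)). rewrite Hu; ring.
    transitivity (uy * (ux * dx + uy * dy) + (- dx * uy + dy * ux) * ux). ring. rewrite Hud. ring. }
  set (s1 := - t1 * lam). set (s2 := s1 + lam).
  assert (Hpx : px = r * ux - s1 * uy). 
  { unfold s1. replace (r * ux) with (px + t1 * dx) by (unfold ux; field; lra). rewrite Hdx. ring. }
  assert (Hpy : py = r * uy + s1 * ux). 
  { unfold s1. replace (r * uy) with (py + t1 * dy) by (unfold uy; field; lra). rewrite Hdy. ring. }
  assert (HPp : (p1, p2) = pnt (o1, o2) r th (te - th) s1).
  { unfold pnt; cbn [fst snd]. replace (te - th + th) with te by ring. rewrite Hcos, Hsin.
    f_equal. unfold px in Hpx; lra. unfold py in Hpy; lra. }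
  assert (HQp : (q1, q2) = pnt (o1, o2) r th (te - th) s2).
  { unfold pnt; cbn [fst snd]. replace (te - th + th) with te by ring. rewrite Hcos, Hsin.
    f_equal. unfold px in Hpx; unfold dx in Hdx; unfold s2; lra. unfold py in Hpy; unfold dy in Hdy; unfold s2; lra. }
  assert (Hcr : cross (vsub (q1, q2) (p1, p2)) (vsub (o1, o2) (p1, p2)) = lam * r).
  { unfold cross, vsub; cbn [fst snd]. fold dx dy. 
    replace (o2 - p2) with (- py) by (unfold py; ring). replace (o1 - p1) with (- px) by (unfold px; ring).
    rewrite Hpx, Hpy, Hdx, Hdy. transitivity (lam * r * (ux^2 + uy^2)). ring. rewrite Hu; ring. }
  rewrite Hcr in Hor.
  assert (Hlam : lam <> 0) by (destruct ccw; intro Z; rewrite Z in Hor; lra).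
  assert (Hs : s1 * s2 < 0).
  { assert (He := fun s => ellq_pnt (o1, o2) a b th r (te - th) s Ha Hb).
    unfold on_ellipse in HP, HQ. rewrite HPp, He in HP. rewrite HQp, He in HQ.
    assert (H0 : ellq (o1, o2) a b th (pnt (o1, o2) r th (te - th) 0) < 1).
    { apply HC. apply oncirc_iff; auto. unfold pnt; cbn [fst snd]. 
      replace (te - th + th) with te by ring. rewrite Hcos, Hsin.
      replace (o1 + r * ux - 0 * uy - o1) with (r * ux) by ring.
      replace (o2 + r * uy + 0 * ux - o2) with (r * uy) by ring.
      transitivity (r^2 * (ux^2 + uy^2)). ring. rewrite Hu; ring. }
    rewrite He in H0.
    set (C := cos (te - th)) in *. set (S := sin (te - th)) in *.
    assert (HH := sin2_cos2 (te - th)). unfold Rsqr in HH. fold C S in HH.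
    apply (quad_sign (S^2 / a^2 + C^2 / b^2) (2 * r * (C * S / b^2 - C * S / a^2)) (r^2 * (C^2 / a^2 + S^2 / b^2))).
    - assert (0 < /a^2) by (apply Rinv_0_lt_compat; nra).
      assert (0 < /b^2) by (apply Rinv_0_lt_compat; nra).
      unfold Rdiv. destruct (Rle_lt_dec (S^2) (1/2)); nra.
    - unfold s2. lra.
    - rewrite <- HP. field. lra.
    - rewrite <- HQ. field. lra.
    - replace (r ^ 2 * (C ^ 2 / a ^ 2 + S ^ 2 / b ^ 2)) with (((r * C - 0 * S) / a) ^ 2 + ((r * S + 0 * C) / b) ^ 2)
        by (field; lra). auto. }
  exists (te - th), s1, s2. split; auto. split; auto.
  destruct ccw; unfold s2 in *.
  - assert (0 < lam) by nra. nra.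
  - assert (lam < 0) by nra. nra.
Qed.

Lemma pnt_flip O r th h t : 0 < r ->
  pnt O r th h t = pnt O r th (h + 2 * atan (t / r)) (- t).
Proof.
  intros Hr. unfold pnt.
  replace (h + 2 * atan (t / r) + th) with ((h + th) + 2 * atan (t / r)) by ring.
  rewrite cos_step, sin_step.
  assert (0 < 1 + (t/r)^2) by nra.
  f_equal; field; repeat split; try lra; nra.
Qed.

Lemma pnt_norm O r th h s :
  (fst (pnt O r th h s) - fst O)^2 + (snd (pnt O r th h s) - snd O)^2 = r^2 + s^2.
Proof.
  unfold pnt; cbn [fst snd]. assert (HH := sin2_cos2 (h + th)). unfold Rsqr in HH.
  transitivity ((r^2 + s^2) * (sin (h + th) * sin (h + th) + cos (h + th) * cos (h + th))).
  ring. rewrite HH. ring.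
Qed.

Lemma vertex_lemma O r th h1 h2 t s : 0 < r ->
  pnt O r th h1 t = pnt O r th h2 s -> t * s < 0 ->
  s = - t /\ cos h2 = cos (h1 + 2 * atan (t / r)) /\ sin h2 = sin (h1 + 2 * atan (t / r)).
Proof.
  intros Hr E Hts.
  assert (Hs : s = - t).
  { pose proof (pnt_norm O r th h1 t). pose proof (pnt_norm O r th h2 s). rewrite E in H.
    assert ((s - t) * (s + t) = 0) by nra. apply Rmult_integral in H1. destruct H1; nra. }
  split; auto. subst s.
  rewrite (pnt_flip O r th h1 t Hr) in E. set (h3 := h1 + 2 * atan (t / r)) in *.
  unfold pnt in E. injection E. intros E2 E1.
  assert (HA2 : cos (h3 + th) = cos (h2 + th) /\ sin (h3 + th) = sin (h2 + th)).
  { assert (X1 : r * cos (h3 + th) + t * sin (h3 + th) = r * cos (h2 + th) + t * sin (h2 + th)) by lra.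
    assert (X2 : r * sin (h3 + th) - t * cos (h3 + th) = r * sin (h2 + th) - t * cos (h2 + th)) by lra.
    split; apply Rmult_eq_reg_l with (r^2 + t^2); try nra.
    - transitivity (r * (r * cos (h3 + th) + t * sin (h3 + th)) - t * (r * sin (h3 + th) - t * cos (h3 + th))). ring.
      rewrite X1, X2. ring.
    - transitivity (t * (r * cos (h3 + th) + t * sin (h3 + th)) + r * (r * sin (h3 + th) - t * cos (h3 + th))). ring.
      rewrite X1, X2. ring. }
  destruct HA2 as [C S].
  replace h3 with ((h3 + th) - th) by ring. replace h2 with ((h2 + th) - th) by ring.
  rewrite !cos_minus, !sin_minus, C, S. auto.
Qed.

Lemma sum_shift (f : nat -> R) N : sum_f_R0 f (S N) = f 0%nat + sum_f_R0 (fun i => f (S i)) N.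
Proof.
  induction N. simpl. ring.
  replace (sum_f_R0 f (S (S N))) with (sum_f_R0 f (S N) + f (S (S N))) by reflexivity.
  rewrite IHN. simpl. ring.
Qed.

Lemma prod_shift (f : nat -> R) N : prod_f_R0 f (S N) = f 0%nat * prod_f_R0 (fun i => f (S i)) N.
Proof.
  induction N. simpl. ring.
  replace (prod_f_R0 f (S (S N))) with (prod_f_R0 f (S N) * f (S (S N))) by reflexivity.
  rewrite IHN. simpl. ring.
Qed.

Lemma sum_rot (f : nat -> R) n : (2 <= n)%nat -> f 0%nat = f n ->
  sum_f_R0 f (n - 1) = sum_f_R0 (fun i => f (S i)) (n - 1).
Proof.
  intros Hn E. destruct n as [|[|m]]; try lia.
  replace (S (S m) - 1)%nat with (S m) by lia.
  rewrite sum_shift. simpl sum_f_R0 at 2. rewrite E. ring.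
Qed.

Lemma prod_rot (f : nat -> R) n : (2 <= n)%nat -> f 0%nat = f n ->
  prod_f_R0 f (n - 1) = prod_f_R0 (fun i => f (S i)) (n - 1).
Proof.
  intros Hn E. destruct n as [|[|m]]; try lia.
  replace (S (S m) - 1)%nat with (S m) by lia.
  rewrite prod_shift. simpl prod_f_R0 at 2. rewrite E. ring.
Qed.

Lemma vtx_mod v n j : (n <> 0)%nat -> vtx v n (j mod n) = vtx v n j.
Proof. intros Hn. unfold vtx. rewrite Nat.Div0.mod_mod. reflexivity. Qed.

Lemma vtx_S_mod v n j : (n <> 0)%nat -> vtx v n (S (j mod n)) = vtx v n (S j).
Proof.
  intros Hn. unfold vtx. f_equal. replace (S (j mod n)) with (j mod n + 1)%nat by lia.
  replace (S j) with (j + 1)%nat by lia. rewrite Nat.Div0.add_mod_idemp_l. reflexivity.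
Qed.

Lemma vtx_per v n j : (n <> 0)%nat -> vtx v n (j + n) = vtx v n j.
Proof.
  intros Hn. unfold vtx. f_equal. rewrite Nat.Div0.add_mod, Nat.Div0.mod_same, Nat.add_0_r, Nat.Div0.mod_mod.
  reflexivity.
Qed.

Lemma cos_acos_cos y : cos (acos (cos y)) = cos y.
Proof. apply cos_acos. apply COS_bound. Qed.

Lemma vnorm_polar R A : 0 <= R -> vnorm (R * cos A, R * sin A) = R.
Proof.
  intros H. unfold vnorm, dot; cbn [fst snd].
  assert (HH := sin2_cos2 A). unfold Rsqr in HH.
  assert (X : R * cos A * (R * cos A) + R * sin A * (R * sin A) = R * R).
  { transitivity (R * R * (sin A * sin A + cos A * cos A)); [ring | rewrite HH; ring]. }
  rewrite X, sqrt_sq_abs. apply Rabs_pos_eq. auto.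
Qed.

Lemma angle_polar R1 R2 A1 A2 : 0 < R1 -> 0 < R2 ->
  cos (acos (dot (R1 * cos A1, R1 * sin A1) (R2 * cos A2, R2 * sin A2) /
         (vnorm (R1 * cos A1, R1 * sin A1) * vnorm (R2 * cos A2, R2 * sin A2)))) = cos (A1 - A2).
Proof.
  intros H1 H2. rewrite !vnorm_polar by lra. unfold dot; cbn [fst snd].
  replace ((R1 * cos A1 * (R2 * cos A2) + R1 * sin A1 * (R2 * sin A2)) / (R1 * R2)) with (cos (A1 - A2)).
  apply cos_acos_cos. rewrite cos_minus. field. lra.
Qed.

Lemma vnorm_tan l A : vnorm (l * - sin A, l * cos A) = Rabs l.
Proof.
  unfold vnorm, dot; cbn [fst snd].
  assert (HH := sin2_cos2 A). unfold Rsqr in HH.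
  assert (X : l * - sin A * (l * - sin A) + l * cos A * (l * cos A) = l * l).
  { transitivity (l * l * (sin A * sin A + cos A * cos A)); [ring | rewrite HH; ring]. }
  rewrite X, sqrt_sq_abs. reflexivity.
Qed.

Lemma angle_tan l m A B : l * m < 0 ->
  cos (acos (dot (l * - sin A, l * cos A) (m * - sin B, m * cos B) /
         (vnorm (l * - sin A, l * cos A) * vnorm (m * - sin B, m * cos B)))) = - cos (A - B).
Proof.
  intros H. rewrite !vnorm_tan. unfold dot; cbn [fst snd].
  assert (E : Rabs l * Rabs m = - (l * m)).
  { rewrite <- Rabs_mult. rewrite Rabs_left; auto. }
  rewrite E.
  replace ((l * - sin A * (m * - sin B) + l * cos A * (m * cos B)) / - (l * m)) with (- cos (A - B)).
  apply cos_acos. pose proof (COS_bound (A - B)). lra.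
  rewrite cos_minus. field. split; intro Z; rewrite Z in H; lra.
Qed.

Definition epsR (ccw : bool) : R := if ccw then 1 else -1.

Fixpoint Gl (h0 : R) (tg : nat -> R) (r : R) (j : nat) : R :=
  match j with O => h0 | S j => Gl h0 tg r j + 2 * atan (tg j / r) end.

Lemma good_of O r a b th : 0 < r -> 0 < a -> 0 < b ->
  (forall x, on_circle O r x -> ellq O a b th x < 1) -> good r a b.
Proof.
  intros Hr Ha Hb HC. repeat split; auto. intros x.
  assert (H := HC (pnt O r th x 0)). rewrite ellq_pnt in H by auto.
  replace (pf r a b x) with (((r * cos x - 0 * sin x) / a) ^ 2 + ((r * sin x + 0 * cos x) / b) ^ 2)
    by (unfold pf; field; lra).
  apply H. apply oncirc_iff; auto. rewrite pnt_norm. ring.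
Qed.

Lemma cos_eps (ccw : bool) y : cos (epsR ccw * y) = cos y.
Proof. destruct ccw; simpl. f_equal; ring. replace (-1 * y) with (- y) by ring. apply cos_neg. Qed.

Lemma poly_param O r a b th (ccw : bool) n v : 0 < r -> 0 < a -> 0 < b ->
  (forall x, on_circle O r x -> ellq O a b th x < 1) -> (3 <= n)%nat ->
  poncelet_ngon O r a b th ccw n v ->
  exists x0 c, isper c /\ It r a b n x0 = x0 + c /\
    sum_cos_alpha v n = Sm r a b n x0 /\ prod_cos_central O v n = Pm r a b n x0.
Proof.
  intros Hr Ha Hb HC Hn HP.
  assert (G := good_of O r a b th Hr Ha Hb HC).
  assert (Hn0 : (n <> 0)%nat) by lia.
  assert (Hell : forall j, on_ellipse O a b th (vtx v n j)).
  { intros j. rewrite <- vtx_mod by auto. apply HP. apply Nat.mod_upper_bound; auto. }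
  assert (HS : forall i, exists hst : R * (R * R), (i < n)%nat ->
     vtx v n i = pnt O r th (fst hst) (fst (snd hst)) /\
     vtx v n (S i) = pnt O r th (fst hst) (snd (snd hst)) /\
     (if ccw then fst (snd hst) < 0 < snd (snd hst) else snd (snd hst) < 0 < fst (snd hst))).
  { intros i. destruct (Nat.lt_ge_cases i n) as [l|l].
    - destruct (HP i l) as [He [Ht Ho]].
      destruct (side_lemma O r a b th ccw (vtx v n i) (vtx v n (S i)) Hr Ha Hb HC He (Hell (S i)) Ht Ho)
        as [h [s1 [s2 [E1 [E2 E3]]]]].
      exists (h, (s1, s2)). intros _. simpl. auto.
    - exists (0, (0, 0)). intros; lia. }
  destruct (functional_choice _ HS) as [f Hf].
  set (hh := fun j => fst (f (j mod n)%nat)).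
  set (sg := fun j => fst (snd (f (j mod n)%nat))).
  set (tg := fun j => snd (snd (f (j mod n)%nat))).
  assert (Hside : forall j, vtx v n j = pnt O r th (hh j) (sg j) /\
      vtx v n (S j) = pnt O r th (hh j) (tg j) /\
      (if ccw then sg j < 0 < tg j else tg j < 0 < sg j)).
  { intros j. destruct (Hf (j mod n)%nat (Nat.mod_upper_bound j n Hn0)) as [E1 [E2 E3]].
    rewrite vtx_mod in E1 by auto. rewrite vtx_S_mod in E2 by auto. auto. }
  set (Gs := Gl (hh 0%nat) tg r).
  assert (HG : forall j, cos (Gs j) = cos (hh j) /\ sin (Gs j) = sin (hh j)).
  { induction j as [|j [IC IS]]. simpl. auto.
    destruct (Hside j) as [_ [E1 S1]]. destruct (Hside (S j)) as [E2 [_ S2]].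
    rewrite E2 in E1.
    assert (Hts : tg j * sg (S j) < 0) by (destruct ccw; nra).
    destruct (vertex_lemma O r th (hh j) (hh (S j)) (tg j) (sg (S j)) Hr (eq_sym E1) Hts) as [_ [C S]].
    unfold Gs; simpl Gl; fold Gs. rewrite C, S, !cos_plus, !sin_plus, IC, IS. auto. }
  assert (HpG : forall j, vtx v n (S j) = pnt O r th (Gs j) (tg j)).
  { intros j. destruct (Hside j) as [_ [E _]]. rewrite E. destruct (HG j) as [C S].
    apply pnt_ext; auto. }
  set (eps := epsR ccw).
  set (Hs := fun j => eps * Gs j).
  assert (HIt : forall j, Hs j = It r a b j (Hs 0%nat)).
  { induction j as [|j IH]. reflexivity.
    simpl It. rewrite <- IH.
    destruct (Hside j) as [_ [_ Sg]].
    assert (Hpos : 0 < eps * tg j / r).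
    { unfold eps, epsR. destruct ccw; apply Rdiv_lt_0_compat; lra. }
    assert (HE : Ef r a b (Hs j) (eps * tg j / r) = 1).
    { pose proof (Hell (S j)) as He. unfold on_ellipse in He. rewrite HpG, ellq_pnt in He by auto.
      rewrite <- He. unfold Ef, Hs, eps, epsR. destruct ccw.
      - replace (1 * Gs j) with (Gs j) by ring. field. split; lra.
      - replace (-1 * Gs j) with (- Gs j) by ring. rewrite cos_neg, sin_neg. field. split; lra. }
    pose proof (tf_unique r a b (Hs j) _ G Hpos HE) as U.
    unfold Tf. rewrite <- U. unfold Hs, Gs. simpl Gl. fold Gs. unfold eps, epsR. destruct ccw.
    - replace (1 * tg j / r) with (tg j / r) by (field; lra). ring.
    - replace (-1 * tg j / r) with (- (tg j / r)) by (field; lra). rewrite atan_opp. ring. }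
  assert (Hcl : cos (Gs n) = cos (Gs 0%nat) /\ sin (Gs n) = sin (Gs 0%nat)).
  { destruct (HG n) as [C1 S1]. destruct (HG 0%nat) as [C0 S0]. rewrite C1, S1, C0, S0.
    unfold hh. rewrite Nat.Div0.mod_same, Nat.Div0.mod_0_l. auto. }
  set (x0 := Hs 0%nat). exists x0, (Hs n - Hs 0%nat).
  assert (Hper : isper (Hs n - Hs 0%nat)).
  { unfold Hs. replace (eps * Gs n - eps * Gs 0%nat) with (eps * (Gs n - Gs 0%nat)) by ring.
    destruct Hcl as [C S]. assert (HH := sin2_cos2 (Gs 0%nat)). unfold Rsqr in HH.
    assert (c1 : cos (Gs n - Gs 0%nat) = 1) by (rewrite cos_minus, C, S; lra).
    assert (s1 : sin (Gs n - Gs 0%nat) = 0) by (rewrite sin_minus, C, S; ring).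
    unfold eps, epsR; destruct ccw; split.
    - rewrite Rmult_1_l; auto. - rewrite Rmult_1_l; auto.
    - replace (-1 * (Gs n - Gs 0%nat)) with (- (Gs n - Gs 0%nat)) by ring. rewrite cos_neg; auto.
    - replace (-1 * (Gs n - Gs 0%nat)) with (- (Gs n - Gs 0%nat)) by ring. rewrite sin_neg, s1; ring. }
  split; auto. split. rewrite <- HIt. unfold x0. ring.
  assert (Hdiff : forall j k, cos (hh j - hh k) = cos (Hs k - Hs j)).
  { intros j k. destruct (HG j) as [Cj Sj]. destruct (HG k) as [Ck Sk].
    rewrite cos_minus, <- Cj, <- Sj, <- Ck, <- Sk, <- cos_minus. unfold Hs.
    replace (eps * Gs k - eps * Gs j) with (eps * (- (Gs j - Gs k))) by ring.
    unfold eps. rewrite cos_eps, cos_neg. reflexivity. }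
  split.
  -
    assert (Hterm : forall j, cos (alpha v n (S j)) = - cos (It r a b (S j) x0 - It r a b j x0)).
    { intros j. unfold alpha. replace (S j + n - 1)%nat with (j + n)%nat by lia. rewrite vtx_per by auto.
      destruct (Hside j) as [E0 [E1 S1]]. destruct (Hside (S j)) as [E2 [E3 S2]].
      assert (V1 : vsub (vtx v n j) (vtx v n (S j)) = ((sg j - tg j) * - sin (hh j + th), (sg j - tg j) * cos (hh j + th)))
        by (rewrite E0, E1; apply vsub_pnt_pnt).
      assert (V2 : vsub (vtx v n (S (S j))) (vtx v n (S j)) = ((tg (S j) - sg (S j)) * - sin (hh (S j) + th), (tg (S j) - sg (S j)) * cos (hh (S j) + th)))
        by (rewrite E3, E2; apply vsub_pnt_pnt).
      unfold angle. rewrite V1, V2. rewrite angle_tan.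
      2: { destruct ccw; nra. }
      replace (hh j + th - (hh (S j) + th)) with (hh j - hh (S j)) by ring.
      rewrite Hdiff. unfold x0. rewrite <- !HIt. reflexivity. }
    unfold sum_cos_alpha. rewrite sum_rot.
    2: lia.
    2: { unfold alpha. replace (n + n - 1)%nat with ((n - 1) + n)%nat by lia.
         replace (0 + n - 1)%nat with (n - 1)%nat by lia.
         assert (A0 : vtx v n (n - 1 + n) = vtx v n (n - 1)) by (apply (vtx_per v n (n - 1)); auto).
         assert (A1 : vtx v n n = vtx v n 0) by (apply (vtx_per v n 0); auto).
         assert (A2 : vtx v n (S n) = vtx v n 1) by (apply (vtx_per v n 1); auto).
         rewrite A0, A1, A2. reflexivity. }
    replace n with (S (n - 1)) at 2 by lia.
    generalize (n - 1)%nat. intros m. induction m.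
    + simpl. rewrite Hterm. simpl. ring.
    + simpl sum_f_R0. rewrite IHm. rewrite Hterm. simpl Sm; simpl It. ring.
  -
    assert (Hterm : forall j, cos (angle (vtx v n (S j)) O (vtx v n (S (S j))))
                     = cos ((It r a b (S (S j)) x0 - It r a b j x0) / 2)).
    { intros j. rewrite !HpG. unfold angle. rewrite !pnt_polar by auto.
      rewrite angle_polar. 2,3: apply sqrt_lt_R0; nra.
      unfold x0. rewrite <- !HIt. unfold Hs.
      assert (E1 : atan (tg j / r) = (Gs (S j) - Gs j) / 2) by (unfold Gs; simpl Gl; field).
      assert (E2 : atan (tg (S j) / r) = (Gs (S (S j)) - Gs (S j)) / 2)
        by (unfold Gs; simpl Gl; field).
      rewrite E1, E2.
      replace (Gs j + (Gs (S j) - Gs j) / 2 + th - (Gs (S j) + (Gs (S (S j)) - Gs (S j)) / 2 + th))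
        with (- ((Gs (S (S j)) - Gs j) / 2)) by field.
      rewrite cos_neg. replace ((eps * Gs (S (S j)) - eps * Gs j) / 2) with (eps * ((Gs (S (S j)) - Gs j) / 2))
        by field.
      unfold eps. rewrite cos_eps. reflexivity. }
    unfold prod_cos_central. rewrite prod_rot.
    2: lia.
    2: { assert (A1 : vtx v n n = vtx v n 0) by (apply (vtx_per v n 0); auto).
         assert (A2 : vtx v n (S n) = vtx v n 1) by (apply (vtx_per v n 1); auto).
         rewrite A1, A2. reflexivity. }
    replace n with (S (n - 1)) at 2 by lia.
    generalize (n - 1)%nat. intros m. induction m.
    + simpl. rewrite Hterm. simpl. ring.
    + simpl prod_f_R0. rewrite IHm. rewrite Hterm. simpl Pm; simpl It. ring.
Qed.


Theorem corollary6p5 (O : pt) (r a b th : R) (n : nat) (ccw : bool)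
    (v w : nat -> pt) :
  0 < r -> 0 < a -> 0 < b ->
  (* omega lies in the interior of eta *)
  (forall x : pt, on_circle O r x -> ellq O a b th x < 1) ->
  (3 <= n)%nat ->
  (* v is a closed Poncelet n-gon, w any member of its Poncelet family *)
  poncelet_ngon O r a b th ccw n v ->
  poncelet_ngon O r a b th ccw n w ->
  sum_cos_alpha w n = sum_cos_alpha v n /\
  prod_cos_central O w n = prod_cos_central O v n.
Proof.
  intros Hr Ha Hb HC Hn Hv Hw.
  assert (G := good_of O r a b th Hr Ha Hb HC).
  destruct (poly_param O r a b th ccw n v Hr Ha Hb HC Hn Hv) as [xv [cv [Pv [Iv [Sv Qv]]]]].
  destruct (poly_param O r a b th ccw n w Hr Ha Hb HC Hn Hw) as [xw [cw [Pw [Iw [Sw Qw]]]]].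
  pose proof (porism r a b n cv xv G Pv Iv) as Por.
  rewrite Sv, Sw, Qv, Qw. split.
  - apply (Sm_const r a b n cv G Pv Por).
  - apply (Pm_const r a b n cv G Pv Por).
Qed.
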